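(* Let $Y$ be a relation variable of type $\{(\mathtt n,\mathtt n)\}$ and $U$ a function variable of type $\emptyset\to\mathtt n$. Then there are an arithmetical $\mathsf{FO{+}C}$-formula $\mathrm{s\text{-}itadd}$ and an arithmetical $\mathsf{FO{+}C}$-term $\mathrm{bd\text{-}s\text{-}itadd}$ (both possibly using $Y$ and $U$) such that for all numerical assignments $\mathfrak a$, $$\Big\langle \mathrm{s\text{-}itadd},\mathrm{bd\text{-}s\text{-}itadd}\Big\rangle^{\mathfrak a}=\sum_{i<\mathfrak a(U)}\langle Y,U\rangle^{\mathfrak a}(i).$$
   Context: $\mathsf{FO{+}C}$ is two-sorted first-order logic with counting: vertex variables range over the universe of a finite structure, number variables over $\mathbb N$. Terms: number variables, $0$, $1$, $\theta+\theta'$, $\theta\cdot\theta'$, terms $U(\xi_1,\dots,\xi_k)$ for function variables $U$, and counting terms $\#(x_1,\dots,x_k,y_1<\theta_1,\dots,y_\ell<\theta_\ell).\varphi$ (value: the number of tuples $(a_1..a_k,b_1..b_\ell)$, $a_i$ vertices, $b_i\in\mathbb N$, with each $b_i$ below the value of $\theta_i$ under the assignment extended by $x\mapsto a$, $y_1..y_{i-1}\mapsto b_1..b_{i-1}$, satisfying $\varphi$ under the assignment extended by all of them). Formulas: $\theta\le\theta'$, $x=x'$, relational atoms, atoms $X(\xi_1,\dots,\xi_k)$ for relation variables $X$, $\neg$, $\wedge$. Relation and function variables have types: a relation variable of type $\{(t_1,\dots,t_k)\}$ ($t_i\in\{\mathtt v,\mathtt n\}$) is interpreted by a subset of the corresponding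 product of universe/$\mathbb N$; a function variable of type $(t_1..t_k)\to\mathtt n$ by a function from that product to $\mathbb N$; in atoms $X(\xi_1..\xi_k)$ and terms $U(\xi_1..\xi_k)$, $\xi_i$ is a vertex variable if $t_i=\mathtt v$ and a term if $t_i=\mathtt n$. There is no quantification over relation/function variables. An expression is arithmetical if it contains no vertex variables; its value then depends only on a numerical assignment $\mathfrak a$ (values of number variables and of relation/function variables of purely numerical type). For a $0$-ary function variable write $\mathfrak a(U)$ for its value. Notation: $\langle Y,U\rangle^{\mathfrak a}(i)=\sum\{2^j: (j,i)\in\mathfrak a(Y),\ j<\mathfrak a(U)\}$. For a fixed distinguished number variable $\hat y$, a formula $\chi$ and a term $\theta$, $\langle\chi,\theta\rangle^{\mathfrak a}=\sum\{2^i: i<\text{value of }\theta\text{ under }\mathfrak a,\ \chi\text{ holds under }\mathfrak a\text{ modified to }\hat y\mapsto i\}$. *)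

(* Defs.v *)
From mathcomp Require Import all_boot.
Set Implicit Arguments. Unset Strict Implicit. Unset Printing Implicit Defensive.

(* A relation/function variable is identified by its name
   together with its arity (number of arguments); all argument positions are
   of numerical type n (arithmetical expressions contain no vertex variables). *)
Inductive term : Type :=
  | TVar   : nat -> term
  | TZero  : term
  | TOne   : term
  | TAdd   : term -> term -> term
  | TMul   : term -> term -> term
  | TFun   : nat -> tlist -> term
  | TCount : blist -> form -> term         (* #(y_1<theta_1,...,y_l<theta_l).phi *)
with form : Type :=
  | FLe  : term -> term -> form
  | FRel : nat -> tlist -> form
  | FNot : form -> form
  | FAnd : form -> form -> form
with tlist : Type :=
  | TNil  : tlist
  | TCons : term -> tlist -> tlist
with blist : Type :=
  | BNil  : blist
  | BCons : nat -> term -> blist -> blist.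

(* Numerical assignment: values of number variables, of relation variables
   (name, arity) as subsets of N^arity (given by characteristic functions on
   argument lists of that length) and of function variables (name, arity). *)
Record assignment := Assignment {
  nv : nat -> nat;
  rv : nat -> nat -> seq nat -> bool;
  fv : nat -> nat -> seq nat -> nat }.

Definition upd (a : assignment) (y b : nat) : assignment :=
  Assignment (fun z => if z == y then b else nv a z) (rv a) (fv a).

Fixpoint evalT (a : assignment) (t : term) {struct t} : nat :=
  match t with
  | TVar y => nv a y
  | TZero => 0
  | TOne => 1
  | TAdd t1 t2 => evalT a t1 + evalT a t2
  | TMul t1 t2 => evalT a t1 * evalT a t2
  | TFun f args => let s := evalL a args in fv a f (size s) s
  | TCount bs phi =>
      (fix cnt (a : assignment) (bs : blist) {struct bs} : nat :=
         match bs with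
         | BNil => if evalF a phi then 1 else 0
         | BCons y th bs' =>
             sumn (map (fun b => cnt (upd a y b) bs') (iota 0 (evalT a th)))
         end) a bs
  end
with evalF (a : assignment) (f : form) {struct f} : bool :=
  match f with
  | FLe t1 t2 => evalT a t1 <= evalT a t2
  | FRel r args => let s := evalL a args in rv a r (size s) s
  | FNot g => ~~ evalF a g
  | FAnd g h => evalF a g && evalF a h
  end
with evalL (a : assignment) (l : tlist) {struct l} : seq nat :=
  match l with
  | TNil => [::]
  | TCons t l' => evalT a t :: evalL a l'
  end.

(* Fixed names: the distinguished number variable y-hat, the relation
   variable Y of type {(n,n)} and the 0-ary function variable U. *)
Definition yhat : nat := 0.
Definition Yname : nat := 0.
Definition Uname : nat := 0.

Definition valU (a : assignment) : nat := fv a Uname 0 [::].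

Definition YU (a : assignment) (i : nat) : nat :=
  \sum_(j < valU a | rv a Yname 2 [:: (j : nat); i]) 2 ^ j.

Definition bitval (a : assignment) (chi : form) (theta : term) : nat :=
  \sum_(i < evalT a theta | evalF (upd a yhat i) chi) 2 ^ i.

(* Main.v *)
Require Import Defs.
From mathcomp Require Import all_boot zify.
From Stdlib Require Import FunctionalExtensionality.
Set Implicit Arguments. Unset Strict Implicit. Unset Printing Implicit Defensive.

Fixpoint fvT (n : nat) (t : term) {struct t} : bool :=
  match t with
  | TVar y => y == n
  | TZero => false
  | TOne => false
  | TAdd t1 t2 => fvT n t1 || fvT n t2
  | TMul t1 t2 => fvT n t1 || fvT n t2
  | TFun _ l => fvL n l
  | TCount bs phi =>
     (fix fb (bs : blist) : bool :=
        match bs with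
        | BNil => fvF n phi
        | BCons y th bs' => fvT n th || ((y != n) && fb bs')
        end) bs
  end
with fvF (n : nat) (f : form) {struct f} : bool :=
  match f with
  | FLe t1 t2 => fvT n t1 || fvT n t2
  | FRel _ l => fvL n l
  | FNot g => fvF n g
  | FAnd g h => fvF n g || fvF n h
  end
with fvL (n : nat) (l : tlist) {struct l} : bool :=
  match l with
  | TNil => false
  | TCons t l' => fvT n t || fvL n l'
  end.

Fixpoint fvB (n : nat) (bs : blist) (phi : form) : bool :=
  match bs with
  | BNil => fvF n phi
  | BCons y th bs' => fvT n th || ((y != n) && fvB n bs' phi)
  end.

Fixpoint cntB (a : assignment) (bs : blist) (phi : form) : nat :=
  match bs with
  | BNil => if evalF a phi then 1 else 0
  | BCons y th bs' => sumn (map (fun b => cntB (upd a y b) bs' phi) (iota 0 (evalT a th)))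
  end.

Lemma fvT_count n bs phi : fvT n (TCount bs phi) = fvB n bs phi.
Proof. by elim: bs => //= y th bs ->. Qed.

Lemma evalT_count a bs phi : evalT a (TCount bs phi) = cntB a bs phi.
Proof.
elim: bs a => //= y th bs IH a; congr sumn; apply: eq_map => b; exact: IH.
Qed.

Lemma upd_shadow a n v b : upd (upd a n v) n b = upd a n b.
Proof.
rewrite /upd /=; congr Assignment; apply: functional_extensionality => z.
by case: (z == n).
Qed.

Lemma upd_comm a n v y b : y != n -> upd (upd a n v) y b = upd (upd a y b) n v.
Proof.
move=> hyn; rewrite /upd /=; congr Assignment; apply: functional_extensionality => z.
case: (eqVneq z y) => [->|//]; by rewrite (negbTE hyn).
Qed.

Scheme term_ind' := Induction for term Sort Prop
with form_ind' := Induction for form Sort Prop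
with tlist_ind' := Induction for tlist Sort Prop
with blist_ind' := Induction for blist Sort Prop.

Lemma fresh_all n :
  (forall t, forall a v, ~~ fvT n t -> evalT (upd a n v) t = evalT a t) /\
  (forall f, forall a v, ~~ fvF n f -> evalF (upd a n v) f = evalF a f).
Proof.
pose PT t := forall a v, ~~ fvT n t -> evalT (upd a n v) t = evalT a t.
pose PF f := forall a v, ~~ fvF n f -> evalF (upd a n v) f = evalF a f.
pose PL l := forall a v, ~~ fvL n l -> evalL (upd a n v) l = evalL a l.
pose PB bs := forall phi, PF phi -> forall a v, ~~ fvB n bs phi ->
   cntB (upd a n v) bs phi = cntB a bs phi.
have H : forall t, PT t.
  apply: (@term_ind' PT PF PL PB); rewrite /PT /PF /PL /PB => //.
  - move=> y a v /=; rewrite /upd /=; by case: eqP.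
  - by move=> t1 IH1 t2 IH2 a v; rewrite negb_or => /andP[h1 h2] /=; rewrite IH1 // IH2.
  - by move=> t1 IH1 t2 IH2 a v; rewrite negb_or => /andP[h1 h2] /=; rewrite IH1 // IH2.
  - by move=> f l IH a v h /=; rewrite IH.
  - move=> bs IHb phi IHf a v; rewrite fvT_count !evalT_count => h; exact: IHb.
  - by move=> t1 IH1 t2 IH2 a v; rewrite negb_or => /andP[h1 h2] /=; rewrite IH1 // IH2.
  - by move=> r l IH a v h /=; rewrite IH.
  - by move=> g IH a v h /=; rewrite IH.
  - by move=> g IH1 h IH2 a v; rewrite negb_or => /andP[h1 h2] /=; rewrite IH1 // IH2.
  - by move=> t1 IH1 t2 IH2 a v; rewrite negb_or => /andP[h1 h2] /=; rewrite IH1 // IH2.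
  - move=> phi IHf a v h /=; by rewrite IHf.
  - move=> y th IHt bs IHb phi IHf a v /=; rewrite negb_or => /andP[h1 h2].
    rewrite IHt //; congr sumn; apply: eq_map => b.
    case: (eqVneq y n) => [->|hyn]; first by rewrite upd_shadow.
    rewrite upd_comm //; apply: IHb => //; by move: h2; rewrite hyn.
split=> //.
apply: (@form_ind' PT PF PL PB); rewrite /PT /PF /PL /PB => //.
  - move=> y a v /=; rewrite /upd /=; by case: eqP.
  - by move=> t1 IH1 t2 IH2 a v; rewrite negb_or => /andP[h1 h2] /=; rewrite IH1 // IH2.
  - by move=> t1 IH1 t2 IH2 a v; rewrite negb_or => /andP[h1 h2] /=; rewrite IH1 // IH2.
  - by move=> f l IH a v h /=; rewrite IH.
  - move=> bs IHb phi IHf a v; rewrite fvT_count !evalT_count => h; exact: IHb.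
  - by move=> t1 IH1 t2 IH2 a v; rewrite negb_or => /andP[h1 h2] /=; rewrite IH1 // IH2.
  - by move=> r l IH a v h /=; rewrite IH.
  - by move=> g IH a v h /=; rewrite IH.
  - by move=> g IH1 h IH2 a v; rewrite negb_or => /andP[h1 h2] /=; rewrite IH1 // IH2.
  - by move=> t1 IH1 t2 IH2 a v; rewrite negb_or => /andP[h1 h2] /=; rewrite IH1 // IH2.
  - move=> phi IHf a v h /=; by rewrite IHf.
  - move=> y th IHt bs IHb phi IHf a v /=; rewrite negb_or => /andP[h1 h2].
    rewrite IHt //; congr sumn; apply: eq_map => b.
    case: (eqVneq y n) => [->|hyn]; first by rewrite upd_shadow.
    rewrite upd_comm //; apply: IHb => //; by move: h2; rewrite hyn.
Qed.

Lemma freshT n t a v : ~~ fvT n t -> evalT (upd a n v) t = evalT a t.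
Proof. by case: (fresh_all n) => H _; apply: H. Qed.
Lemma freshF n f a v : ~~ fvF n f -> evalF (upd a n v) f = evalF a f.
Proof. by case: (fresh_all n) => _ H; apply: H. Qed.

Definition tU := TFun 0 TNil.
Definition Eq x y := FAnd (FLe x y) (FLe y x).
Definition Lt x y := FNot (FLe y x).
Definition Imp f g := FNot (FAnd f (FNot g)).
Definition Cnt1 z th phi := TCount (BCons z th BNil) phi.
Definition Ex z th phi := FLe TOne (Cnt1 z th phi).
Definition All z th phi := FNot (Ex z th (FNot phi)).
Definition Yat j i := FRel 0 (TCons j (TCons i TNil)).

Lemma sumn_map_b (P : nat -> bool) n :
  sumn (map (fun v => if P v then 1 else 0) (iota 0 n)) = \sum_(v < n) P v.
Proof.
rewrite sumnE big_map -(big_mkord xpredT (fun v => nat_of_bool (P v))).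
by rewrite /index_iota subn0.
Qed.

Lemma evalCnt1 a z th phi :
  evalT a (Cnt1 z th phi) = \sum_(v < evalT a th) evalF (upd a z v) phi.
Proof. by rewrite /Cnt1 evalT_count /= sumn_map_b. Qed.

Lemma has_sum (P : nat -> bool) n : (0 < \sum_(v < n) P v) = has P (iota 0 n).
Proof.
elim: n => [|n IH]; first by rewrite big_ord0.
have -> : iota 0 n.+1 = iota 0 n ++ [:: n] by rewrite -addn1 iotaD.
rewrite big_ord_recr has_cat /= -IH orbF.
by case: (P n); rewrite ?addn1 ?addn0 ?orbT ?orbF.
Qed.

Lemma evalEx a z th phi :
  evalF a (Ex z th phi) = has (fun v => evalF (upd a z v) phi) (iota 0 (evalT a th)).
Proof. by rewrite -has_sum -evalCnt1. Qed.

Lemma evalAll a z th phi :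
  evalF a (All z th phi) = all (fun v => evalF (upd a z v) phi) (iota 0 (evalT a th)).
Proof.
have -> : evalF a (All z th phi) = ~~ evalF a (Ex z th (FNot phi)) by [].
rewrite evalEx -all_predC; by apply: eq_all => v /=; rewrite negbK.
Qed.

Lemma evalEq a x y : evalF a (Eq x y) = (evalT a x == evalT a y).
Proof. by rewrite /= eqn_leq. Qed.
Lemma evalLt a x y : evalF a (Lt x y) = (evalT a x < evalT a y).
Proof. by rewrite /= ltnNge. Qed.
Lemma evalImp a f g : evalF a (Imp f g) = (evalF a f ==> evalF a g).
Proof. by rewrite /=; case: (evalF a f); case: (evalF a g). Qed.
Lemma evalU a : evalT a tU = valU a.
Proof. by []. Qed.
Lemma evalY a j i : evalF a (Yat j i) = rv a Yname 2 [:: evalT a j; evalT a i].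
Proof. by []. Qed.
Lemma upd_same a z v : nv (upd a z v) z = v.
Proof. by rewrite /= eqxx. Qed.

Lemma evalAdd a x y : evalT a (TAdd x y) = evalT a x + evalT a y. Proof. by []. Qed.
Lemma evalMul a x y : evalT a (TMul x y) = evalT a x * evalT a y. Proof. by []. Qed.
Lemma evalVar a z : evalT a (TVar z) = nv a z. Proof. by []. Qed.
Lemma evalOne a : evalT a TOne = 1. Proof. by []. Qed.
Lemma sum_lt x n : \sum_(v < x) (v < n) = minn x n.
Proof.
elim: x => [|x IH]; first by rewrite big_ord0 min0n.
rewrite big_ord_recr /= IH.
case: (ltnP x n) => h /=; lia.
Qed.

Definition Div t x m := Cnt1 t x (FLe (TMul (TAdd (TVar t) TOne) m) x).
Definition Mod t x m := Cnt1 t m (Lt (TAdd (TVar t) (TMul m (Div t x m))) x).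

Lemma evalDiv a t x m : ~~ fvT t x -> ~~ fvT t m -> 0 < evalT a m ->
  evalT a (Div t x m) = evalT a x %/ evalT a m.
Proof.
move=> hx hm hpos; rewrite /Div evalCnt1.
under eq_bigr => v _ do rewrite /= !freshT // eqxx -leq_divRL // addn1.
by rewrite sum_lt; apply/minn_idPr; apply: leq_div.
Qed.

Lemma evalMod a t x m : ~~ fvT t x -> ~~ fvT t m -> 0 < evalT a m ->
  evalT a (Mod t x m) = evalT a x %% evalT a m.
Proof.
move=> hx hm hpos; rewrite /Mod evalCnt1.
have E : forall v, (v + evalT a m * (evalT a x %/ evalT a m) < evalT a x) = (v < evalT a x %% evalT a m).
  move=> v; rewrite {2}(divn_eq (evalT a x) (evalT a m)) mulnC addnC ltn_add2l //.
rewrite (eq_bigr (fun v : 'I__ => nat_of_bool (v < evalT a x %% evalT a m))); last first.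
  move=> v _; rewrite evalLt !evalAdd !evalMul evalVar upd_same !(freshT _ _ hx) !(freshT _ _ hm).
  by rewrite evalDiv // ?freshT // E.
by rewrite sum_lt; apply/minn_idPr; apply/ltnW; rewrite ltn_mod.
Qed.

Definition pwv (B r : nat) := if 2 ^ r <= B then 2 ^ r else 0.

Definition Dvd w d x := Ex w (TAdd x TOne) (Eq (TMul (TVar w) d) x).
Definition OddF w x := Ex w (TAdd x TOne) (Eq (TAdd (TAdd (TVar w) (TVar w)) TOne) x).

Lemma has_dvd d x : has (fun q => q * d == x) (iota 0 x.+1) = (d %| x).
Proof.
apply/hasP/idP => [[q _ /eqP <-]|h]; first exact: dvdn_mull.
exists (x %/ d); last by rewrite divnK.
by rewrite mem_iota add0n ltnS leq_div.
Qed.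

Lemma has_odd x : has (fun h => h + h + 1 == x) (iota 0 x.+1) = odd x.
Proof.
apply/hasP/idP => [[h _ /eqP <-]|h].
  by rewrite addn1 /= addnn odd_double.
exists x./2; last by rewrite -{3}(odd_double_half x) h addnn add1n addn1.
rewrite mem_iota add0n ltnS leq_half_double -addnn; lia.
Qed.

Lemma evalDvd a w d x : ~~ fvT w d -> ~~ fvT w x ->
  evalF a (Dvd w d x) = (evalT a d %| evalT a x).
Proof.
move=> hd hx; rewrite /Dvd evalEx evalAdd evalOne addn1 -has_dvd.
by apply: eq_has => q; rewrite evalEq evalMul evalVar upd_same !freshT.
Qed.

Lemma evalOdd a w x : ~~ fvT w x -> evalF a (OddF w x) = odd (evalT a x).
Proof.
move=> hx; rewrite /OddF evalEx evalAdd evalOne addn1 -has_odd.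
by apply: eq_has => q; rewrite evalEq !evalAdd evalOne evalVar upd_same !freshT.
Qed.

Definition ispow2 X := (0 < X) && all (fun d => (d %| X) && odd d ==> (d <= 1)) (iota 0 X.+1).

Lemma ispow2E X : ispow2 X = (X == 2 ^ logn 2 X).
Proof.
apply/idP/eqP => [/andP[hX /allP h]|->].
  have [m cm E] := pfactor_coprime (isT : prime 2) hX.
  move: cm; rewrite coprime2n => om.
  have mX : m %| X by rewrite E dvdn_mulr.
  have m1 : m <= 1.
    have := h m; rewrite mem_iota add0n ltnS (dvdn_leq hX mX) mX om; by apply.
  have m0 : 0 < m by case: m om {E mX m1}.
  have m1' : m = 1 by lia.
  by rewrite {1}E m1' mul1n.
rewrite /ispow2 expn_gt0 andTb; apply/allP => d _; apply/implyP => /andP[hd od].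
have cd : coprime d (2 ^ logn 2 X) by rewrite coprimeXr // coprimen2.
move: cd; rewrite /coprime (gcdn_idPl hd) => /eqP ->; done.
Qed.

Definition IsP2 z w x :=
  FAnd (FLe TOne x) (All z (TAdd x TOne)
     (Imp (FAnd (Dvd w (TVar z) x) (OddF w (TVar z))) (FLe (TVar z) TOne))).

Lemma evalIsP2 a z w x : z != w -> ~~ fvT z x -> ~~ fvT w x ->
  evalF a (IsP2 z w x) = ispow2 (evalT a x).
Proof.
move=> zw hz hw; rewrite /IsP2 /ispow2.
have -> : evalF a (FAnd (FLe TOne x) (All z (TAdd x TOne)
     (Imp (FAnd (Dvd w (TVar z) x) (OddF w (TVar z))) (FLe (TVar z) TOne)))) =
   (0 < evalT a x) && evalF a (All z (TAdd x TOne)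
     (Imp (FAnd (Dvd w (TVar z) x) (OddF w (TVar z))) (FLe (TVar z) TOne))) by [].
rewrite evalAll evalAdd evalOne addn1; congr andb; apply: eq_all => d.
rewrite evalImp.
have -> : evalF (upd a z d) (FAnd (Dvd w (TVar z) x) (OddF w (TVar z))) =
  evalF (upd a z d) (Dvd w (TVar z) x) && evalF (upd a z d) (OddF w (TVar z)) by [].
have wz : ~~ fvT w (TVar z) := zw.
rewrite evalDvd // evalOdd // evalVar upd_same freshT //.
have -> : evalF (upd a z d) (FLe (TVar z) TOne) = (d <= 1) by rewrite /= eqxx.
done.
Qed.

Lemma sum_pow2 k : \sum_(v < 2 ^ k) ispow2 v = k.
Proof.
elim: k => [|k IH]; first by rewrite expn0 big_ord1.
rewrite -(big_mkord xpredT (fun v => nat_of_bool (ispow2 v))) in IH *.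
have le : 2 ^ k <= 2 ^ k.+1 by rewrite leq_exp2l.
rewrite -(big_mkord xpredT (fun v => nat_of_bool (ispow2 v))) (@big_cat_nat _ _ _ (2 ^ k)) //= IH.
rewrite big_ltn ?ltn_exp2l //.
rewrite big1_seq /=.
  rewrite ispow2E pfactorK // eqxx /=; lia.
move=> v; rewrite mem_index_iota => /andP[h1 h2].
suff -> : ispow2 v = false by [].
rewrite ispow2E; apply/negbTE/eqP => E.
have : 2 ^ k < 2 ^ logn 2 v < 2 ^ k.+1 by rewrite -E h1 h2.
by rewrite !ltn_exp2l //; lia.
Qed.

Definition P2 q z w p e := FAnd (IsP2 z w p) (Eq e (Cnt1 q p (IsP2 z w (TVar q)))).

Lemma evalP2 a q z w p e :
  z != w -> q != z -> q != w ->
  ~~ fvT z p -> ~~ fvT w p -> ~~ fvT q p -> ~~ fvT q e ->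
  evalF a (P2 q z w p e) = (evalT a p == 2 ^ evalT a e).
Proof.
move=> zw qz qw hzp hwp hqp hqe.
have -> : evalF a (P2 q z w p e) = evalF a (IsP2 z w p) && evalF a (Eq e (Cnt1 q p (IsP2 z w (TVar q)))) by [].
rewrite evalIsP2 // evalEq evalCnt1.
have hz : ~~ fvT z (TVar q) := qz.
have hw : ~~ fvT w (TVar q) := qw.
under eq_bigr => v _ do rewrite evalIsP2 // evalVar upd_same.
rewrite ispow2E; apply/andP/eqP => [[/eqP E /eqP ->]|E].
  by have := sum_pow2 (logn 2 (evalT a p)); rewrite -E => ->.
by rewrite E pfactorK // eqxx sum_pow2.
Qed.

Definition Pw k p q z w B e :=
  Cnt1 k (TAdd B TOne) (Ex p (TAdd B TOne) (FAnd (P2 q z w (TVar p) e) (Lt (TVar k) (TVar p)))).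


Lemma evalPw a k p q z w B e :
  z != w -> q != z -> q != w -> z != p -> w != p -> q != p -> k != p ->
  ~~ fvT q e -> ~~ fvT p e -> ~~ fvT k e -> ~~ fvT p B -> ~~ fvT k B ->
  evalT a (Pw k p q z w B e) = pwv (evalT a B) (evalT a e).
Proof.
move=> zw qz qw zp wp qp kp hqe hpe hke hpB hkB.
rewrite /Pw evalCnt1 evalAdd evalOne addn1.
have E : forall v, evalF (upd a k v) (Ex p (TAdd B TOne) (FAnd (P2 q z w (TVar p) e) (Lt (TVar k) (TVar p))))
   = (2 ^ evalT a e <= evalT a B) && (v < 2 ^ evalT a e).
  move=> v; rewrite evalEx evalAdd evalOne addn1 (freshT _ _ hkB).
  rewrite (eq_has (a2 := fun P => (P == 2 ^ evalT a e) && (v < P))); last first.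
    move=> P.
    have -> : evalF (upd (upd a k v) p P) (FAnd (P2 q z w (TVar p) e) (Lt (TVar k) (TVar p))) =
      evalF (upd (upd a k v) p P) (P2 q z w (TVar p) e) && evalF (upd (upd a k v) p P) (Lt (TVar k) (TVar p)) by [].
    rewrite evalP2 //= ?eqxx ?(eq_sym p) ?zp ?wp ?qp //.
    by rewrite !freshT // (negbTE kp) -ltnNge.
  apply/hasP/andP => [[P]|[h1 h2]].
    rewrite mem_iota add0n ltnS => h /andP[/eqP E hv]; split => //; by rewrite -E.
  by exists (2 ^ evalT a e); rewrite ?mem_iota ?add0n ?ltnS ?eqxx ?h1 ?h2.
under eq_bigr => v _ do rewrite E.
rewrite /pwv; case: ifP => h.
  under eq_bigr => v _ do rewrite andTb.
  rewrite sum_lt; apply/minn_idPr; exact: leqW.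
by rewrite big1.
Qed.

Definition Bv U := U + U + (1 + 1).
Definition ddf U (Y : nat -> nat -> bool) L b :=
  \sum_(r < L) \sum_(i < U) \sum_(k < pwv (Bv U) r) (Y (b * L + r) i && (b * L + r < U)).
Definition Wv U L := pwv (Bv U) L.
Definition Gf U Y L k := \sum_(j < k) \sum_(t < ddf U Y L j %/ Wv U L) (j + 1 == k).
Definition Zf U Y L k := ddf U Y L k %% Wv U L + Gf U Y L k.
Definition carryf U Y L b :=
  has (fun k => (Wv U L <= Zf U Y L k) &&
     all (fun l => (k < l) ==> (Zf U Y L l + 1 == Wv U L)) (iota 0 b)) (iota 0 b).
Definition sdig U Y L b := (Zf U Y L b + carryf U Y L b) %% Wv U L.
Definition resf U Y L y := odd (sdig U Y L (y %/ L) %/ pwv (Bv U) (y %% L)).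
Definition validf U L := (2 <= Wv U L) && (U <= Wv U L).
Definition Sf U (Y : nat -> nat -> bool) := \sum_(i < U) \sum_(j < U | Y j i) 2 ^ j.

Lemma sum_pow2_lt L : \sum_(r < L) 2 ^ r < 2 ^ L.
Proof.
elim: L => [|L IH]; first by rewrite big_ord0.
by rewrite big_ord_recr /= expnS mul2n -addnn ltn_add2r.
Qed.

Lemma bitsum m n : n < 2 ^ m -> \sum_(i < m | odd (n %/ 2 ^ i)) 2 ^ i = n.
Proof.
elim: m n => [|m IH] n hn.
  by rewrite big_ord0; move: hn; rewrite expn0; case: n.
rewrite big_mkcond big_ord_recl /= expn0 divn1.
rewrite (eq_bigr (fun i : 'I_m => 2 * (if odd ((n %/ 2) %/ 2 ^ i) then 2 ^ i else 0))); last first.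
  move=> i _; rewrite /bump /= add1n expnS -divnMA.
  by case: ifP => _; rewrite ?muln0.
rewrite -big_distrr /= -big_mkcond IH.
  by rewrite {3}(divn_eq n 2) modn2; case: (odd n); lia.
rewrite ltn_divLR // -expnSr; done.
Qed.

Lemma valid_exists U : exists2 L, L < Bv U & validf U L.
Proof.
have [L [h1 h2 h3]] : exists L, [/\ 1 <= L, U <= 2 ^ L & 2 ^ L <= maxn 2 (U + U)].
  elim: U => [|U [L [h1 h2 h3]]]; first by exists 1.
  case: (ltnP U (2 ^ L)) => h.
    exists L; split => //; lia.
  exists L.+1; split => //; rewrite expnS; lia.
have hB : 2 ^ L <= Bv U by rewrite /Bv; lia.
exists L.
  exact: (leq_trans (ltn_expl L (isT : 1 < 2)) hB).
rewrite /validf /Wv /pwv hB.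
have : 2 ^ 1 <= 2 ^ L by rewrite leq_exp2l.
by rewrite expn1 => ->.
Qed.

Lemma valid_W U L : validf U L -> Wv U L = 2 ^ L /\ 2 ^ L <= Bv U.
Proof.
rewrite /validf /Wv /pwv; case: ifP => //; by rewrite andbC.
Qed.

Definition dj U (Y : nat -> nat -> bool) j := \sum_(i < U) (Y j i && (j < U)).

Lemma pw_small U L r : validf U L -> r < L -> pwv (Bv U) r = 2 ^ r.
Proof.
move=> /valid_W [_ hB] hr; rewrite /pwv ifT //.
apply: leq_trans hB; rewrite leq_exp2l //; exact: ltnW.
Qed.

Lemma ddf_eq U Y L b : validf U L ->
  ddf U Y L b = \sum_(r < L) dj U Y (b * L + r) * 2 ^ r.
Proof.
move=> hv; rewrite /ddf; apply: eq_bigr => r _.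
rewrite (pw_small hv (ltn_ord r)) /dj big_distrl /=; apply: eq_bigr => i _.
by rewrite sum_nat_const card_ord mulnC.
Qed.

Lemma dj_le U Y j : dj U Y j <= U.
Proof.
rewrite /dj; apply: (@leq_trans (\sum_(i < U) 1)).
  by apply: leq_sum => i _; apply: leq_b1.
by rewrite sum_nat_const card_ord muln1.
Qed.

Lemma dj_big U Y j : U <= j -> dj U Y j = 0.
Proof.
move=> h; rewrite /dj big1 // => i _; by rewrite ltnNge h andbF.
Qed.

Lemma Sf_eq U Y : Sf U Y = \sum_(j < U) dj U Y j * 2 ^ j.
Proof.
rewrite /Sf.
rewrite (eq_bigr (fun i : 'I_U => \sum_(j < U) Y j i * 2 ^ j)); last first.
  by move=> i _; rewrite big_mkcond /=; apply: eq_bigr => j _; case: (Y j i); rewrite ?mul1n ?mul0n.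
rewrite exchange_big /=; apply: eq_bigr => j _.
by rewrite /dj big_distrl /=; apply: eq_bigr => i _; rewrite ltn_ord andbT.
Qed.

Lemma sum_reindex N L (f : nat -> nat) :
  \sum_(j < N * L) f j = \sum_(b < N) \sum_(r < L) f (b * L + r).
Proof.
elim: N => [|N IH]; first by rewrite mul0n !big_ord0.
rewrite mulSnr big_split_ord /= IH big_ord_recr /=; congr addn.
Qed.

Lemma sum_widen n U (f : nat -> nat) : U <= n -> (forall j, U <= j -> f j = 0) ->
  \sum_(j < n) f j = \sum_(j < U) f j.
Proof.
move=> hn hf; rewrite (big_ord_widen n f hn) [RHS]big_mkcond /=; apply: eq_bigr => j _.
case: ifP => // /negbT; rewrite -leqNgt => h; by rewrite hf.
Qed.

Lemma S_blocks U Y L N : validf U L -> U <= N ->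
  Sf U Y = \sum_(b < N) ddf U Y L b * Wv U L ^ b.
Proof.
move=> hv hN; have [hW hB] := valid_W hv.
have L1 : 1 <= L.
  move: hv; rewrite /validf hW => /andP[h _]; by case: L h {hW hB}.
rewrite Sf_eq -(@sum_widen (N * L) U (fun j => dj U Y j * 2 ^ j)); last first.
  by move=> j h; rewrite dj_big.
  apply: leq_trans hN _; by rewrite leq_pmulr.
rewrite (sum_reindex N L (fun j => dj U Y j * 2 ^ j)); apply: eq_bigr => b _.
rewrite ddf_eq // big_distrl /= hW -expnM; apply: eq_bigr => r _.
by rewrite expnD (mulnC b L) -!mulnA; congr (_ * _); exact: mulnC.
Qed.

Lemma ddf_lt U Y L b : validf U L -> ddf U Y L b < Wv U L * Wv U L.
Proof.
move=> hv; have [hW hB] := valid_W hv.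
have hU : U <= 2 ^ L by move: hv; rewrite /validf hW => /andP[_].
rewrite ddf_eq // hW.
have le1 : \sum_(r < L) dj U Y (b * L + r) * 2 ^ r <= U * \sum_(r < L) 2 ^ r.
  rewrite big_distrr /=; apply: leq_sum => r _; rewrite leq_mul2r dj_le orbT //.
apply: leq_ltn_trans le1 _.
have := sum_pow2_lt L; have := expn_gt0 2 L.
move: (\sum_(r < L) 2 ^ r) (2 ^ L) hU => s w; nia.
Qed.

Lemma Gf_eq U Y L k : Gf U Y L k = if k is k'.+1 then ddf U Y L k' %/ Wv U L else 0.
Proof.
rewrite /Gf; case: k => [|k]; first by rewrite big_ord0.
rewrite big_ord_recr /= addn1 eqxx sum_nat_const card_ord muln1 big1 // => j _.
rewrite big1 // => t _; rewrite addn1 eqSS; case: eqP => // E.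
by have := ltn_ord j; rewrite E ltnn.
Qed.

Definition prevq W (d : nat -> nat) (b : nat) := if b is b'.+1 then d b' %/ W else 0.

Lemma sumQ W (d : nat -> nat) N : 0 < W ->
  \sum_(b < N) (d b %% W + prevq W d b) * W ^ b
   + prevq W d N * W ^ N = \sum_(b < N) d b * W ^ b.
Proof.
move=> hW; elim: N => [|N IH]; first by rewrite !big_ord0.
rewrite !big_ord_recr /= -IH.
set A := \sum_(b < N) _.
set p := prevq W d N.
rewrite [in RHS](divn_eq (d N) W) expnS.
move: (d N %/ W) (d N %% W) (W ^ N) => q m P; nia.
Qed.

Definition carryg W (z : nat -> nat) b :=
  has (fun k => (W <= z k) && all (fun l => (k < l) ==> (z l + 1 == W)) (iota 0 b)) (iota 0 b).

Lemma has_andr (T : eqType) (p : pred T) c s : has (fun k => p k && c) s = has p s && c.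
Proof. by elim: s => //= x s ->; case: (p x); case: c; rewrite /= ?andbT ?andbF ?orbF. Qed.

Lemma carry_rec W z b : carryg W z b.+1 = (W <= z b) || (carryg W z b && (z b + 1 == W)).
Proof.
rewrite /carryg.
have -> : iota 0 b.+1 = iota 0 b ++ [:: b] by rewrite -addn1 iotaD.
rewrite has_cat /= orbF orbC; congr orb.
  rewrite all_cat /= andbT.
  have -> : all (fun l => (b < l) ==> (z l + 1 == W)) (iota 0 b) = true.
    by apply/allP => l; rewrite mem_iota add0n => h; apply/implyP; lia.
  by rewrite ltnn andbT.
rewrite -has_andr; apply: eq_in_has => k; rewrite mem_iota add0n => /andP[_ hk].
by rewrite all_cat /= hk andbT andbA.
Qed.

Lemma sum_carry W (z : nat -> nat) N : 0 < W -> (forall b, z b + 1 < 2 * W) ->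
  \sum_(b < N) z b * W ^ b =
  \sum_(b < N) ((z b + carryg W z b) %% W) * W ^ b + carryg W z N * W ^ N.
Proof.
move=> hW hz; elim: N => [|N IH]; first by rewrite !big_ord0.
rewrite !big_ord_recr /= IH -!addnA; congr (_ + _).
have hc : carryg W z N.+1 = (W <= z N + carryg W z N).
  rewrite carry_rec; have := hz N; case: (carryg W z N) => /=; lia.
have hx : z N + carryg W z N < 2 * W by have := hz N; case: (carryg W z N) => /=; lia.
have key : z N + carryg W z N = (z N + carryg W z N) %% W + (W <= z N + carryg W z N) * W.
  move: (z N + carryg W z N) hx => x hx; case: (leqP W x) => h.
    have -> : x %% W = x - W.
      by rewrite -{1}(subnK h) modnDr modn_small //; lia.
    by rewrite mul1n subnK.
  by rewrite mul0n addn0 modn_small.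
rewrite hc expnS -mulnDl addnC [in LHS]key mulnDl mulnA; done.
Qed.

Lemma digit W (s : nat -> nat) X N q : 0 < W -> (forall b, s b < W) -> q < N ->
  ((\sum_(b < N) s b * W ^ b + X * W ^ N) %/ W ^ q) %% W = s q.
Proof.
move=> hW hs; elim: N s q hs => [|N IH] s q hs hq //.
have E : \sum_(b < N.+1) s b * W ^ b + X * W ^ N.+1 =
   s 0 + (\sum_(b < N) s b.+1 * W ^ b + X * W ^ N) * W.
  rewrite big_ord_recl /= expn0 muln1 -addnA; congr (_ + _).
  rewrite mulnDl big_distrl /= expnS; congr (_ + _).
    by apply: eq_bigr => i _; rewrite /bump /= add1n expnS mulnCA mulnC.
  by rewrite mulnCA mulnC.
rewrite E; case: q hq => [|q] hq.
  by rewrite expn0 divn1 addnC modnMDl modn_small.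
rewrite expnS divnMA addnC divnMDl // (divn_small (hs 0)) addn0.
exact: (IH (fun b => s b.+1)).
Qed.

Lemma bit_digit L M r : r < L -> odd (M %/ 2 ^ r) = odd ((M %% 2 ^ L) %/ 2 ^ r).
Proof.
move=> hr.
have E : 2 ^ L = 2 ^ (L - r) * 2 ^ r by rewrite -expnD subnK // ltnW.
rewrite {1}(divn_eq M (2 ^ L)) {2}E mulnA divnMDl ?expn_gt0 //.
rewrite oddD oddM oddX /=; have -> : (L - r == 0) = false by apply/negbTE; lia.
by rewrite andbF.
Qed.

Lemma L_pos U L : validf U L -> 0 < L.
Proof.
move=> hv; have [hW _] := valid_W hv; move: hv; rewrite /validf hW => /andP[h _].
by case: L h {hW}.
Qed.

Lemma ddf_big U Y L b : validf U L -> U <= b -> ddf U Y L b = 0.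
Proof.
move=> hv hb; have L1 := L_pos hv.
rewrite ddf_eq // big1 // => r _; rewrite dj_big //.
apply: leq_trans hb _; apply: leq_trans (leq_addr _ _); by rewrite leq_pmulr.
Qed.

Lemma main_math U Y L y : validf U L -> y < U + U ->
  resf U Y L y = odd (Sf U Y %/ 2 ^ y).
Proof.
move=> hv hy; have [hW hB] := valid_W hv; have L1 := L_pos hv.
set N := (U + U).+1.
have hUN : U <= N by rewrite /N; lia.
have hS := S_blocks Y hv hUN.
have hW0 : 0 < Wv U L by rewrite hW expn_gt0.
have hQ := sumQ (ddf U Y L) N hW0.
have hp : prevq (Wv U L) (ddf U Y L) N = 0.
  by rewrite /prevq /N ddf_big ?div0n // leq_addr.
rewrite hp mul0n addn0 in hQ.
have hZ : forall b, Zf U Y L b = ddf U Y L b %% Wv U L + prevq (Wv U L) (ddf U Y L) b.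
  by move=> b; rewrite /Zf Gf_eq /prevq.
have hS2 : Sf U Y = \sum_(b < N) Zf U Y L b * Wv U L ^ b.
  rewrite hS -hQ; apply: eq_bigr => b _; by rewrite hZ.
have hz : forall b, Zf U Y L b + 1 < 2 * Wv U L.
  move=> b; rewrite hZ.
  have h1 := ltn_mod (ddf U Y L b) (Wv U L); rewrite hW0 in h1.
  have h2 : prevq (Wv U L) (ddf U Y L) b < Wv U L.
    case: b h1 => [|b] _ //=; rewrite ltn_divLR //; exact: ddf_lt.
  lia.
have hS3 := sum_carry N hW0 hz.
rewrite -hS2 in hS3.
have hq : y %/ L < N by apply: leq_ltn_trans (leq_div _ _) _; rewrite /N; lia.
have hs : forall b, (fun b => (Zf U Y L b + carryg (Wv U L) (Zf U Y L) b) %% Wv U L) b < Wv U L.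
  by move=> b /=; rewrite ltn_mod.
have hdig := digit (carryg (Wv U L) (Zf U Y L) N) hW0 hs hq.
rewrite -hS3 in hdig.
have hr : y %% L < L by rewrite ltn_mod.
rewrite /resf (pw_small hv hr).
have -> : 2 ^ y = Wv U L ^ (y %/ L) * 2 ^ (y %% L).
  by rewrite hW -expnM -expnD mulnC -divn_eq.
rewrite divnMA [RHS](bit_digit _ hr) -hW hdig.
done.
Qed.

Lemma Sf_lt U Y : Sf U Y < 2 ^ (U + U).
Proof.
have h1 : Sf U Y <= U * \sum_(j < U) 2 ^ j.
  rewrite Sf_eq big_distrr /=; apply: leq_sum => j _; rewrite leq_mul2r dj_le orbT //.
have h2 := sum_pow2_lt U.
have h3 : U < 2 ^ U := ltn_expl U (isT : 1 < 2).
rewrite expnD; move: (Sf U Y) (\sum_(j < U) 2 ^ j) (2 ^ U) h1 h2 h3 => S s P; nia.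
Qed.

Lemma final_math U Y :
  \sum_(y < U + U | has (fun L => validf U L && resf U Y L y) (iota 0 (Bv U))) 2 ^ y = Sf U Y.
Proof.
rewrite -[RHS](bitsum (Sf_lt U Y)); apply: eq_bigl => y.
apply/hasP/idP => [[L _ /andP[hv hr]]|ho].
  by rewrite -(main_math Y hv (ltn_ord y)).
have [L hL hv] := valid_exists U.
exists L; first by rewrite mem_iota.
by rewrite hv (main_math Y hv (ltn_ord y)).
Qed.


Definition Ya (a : assignment) := fun j i => rv a Yname 2 [:: j; i].

Lemma valU_upd a n v : valU (upd a n v) = valU a. Proof. by []. Qed.
Lemma Ya_upd a n v : Ya (upd a n v) = Ya a. Proof. by []. Qed.
Lemma nv_upd a n v m : n != m -> nv (upd a n v) m = nv a m.
Proof. by move=> h; rewrite /= eq_sym (negbTE h). Qed.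

Lemma cntB_cons a y th bs phi :
  cntB a (BCons y th bs) phi = sumn (map (fun b => cntB (upd a y b) bs phi) (iota 0 (evalT a th))).
Proof. by []. Qed.
Lemma cntB_nil a phi : cntB a BNil phi = evalF a phi. Proof. by []. Qed.
Lemma sumn_iota (F : nat -> nat) n : sumn (map F (iota 0 n)) = \sum_(v < n) F v.
Proof. by rewrite sumnE big_map -(big_mkord xpredT F) /index_iota subn0. Qed.

Definition tB := TAdd (TAdd tU tU) (TAdd TOne TOne).
Lemma evaltB a : evalT a tB = Bv (valU a). Proof. by []. Qed.

Definition PwT e := Pw 2 3 4 5 6 tB e.
Lemma evalPwT a e : ~~ fvT 2 e -> ~~ fvT 3 e -> ~~ fvT 4 e ->
  evalT a (PwT e) = pwv (Bv (valU a)) (evalT a e).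
Proof. by move=> h2 h3 h4; rewrite /PwT evalPw. Qed.

Definition WT := PwT (TVar 1).
Lemma evalWT a : evalT a WT = Wv (valU a) (nv a 1).
Proof. by rewrite /WT evalPwT. Qed.

Definition jt bt := TAdd (TMul bt (TVar 1)) (TVar 7).
Definition ddT bt := TCount (BCons 7 (TVar 1) (BCons 8 tU (BCons 9 (PwT (TVar 7)) BNil)))
   (FAnd (Yat (jt bt) (TVar 8)) (Lt (jt bt) tU)).

Lemma evalDd a bt : ~~ fvT 7 bt -> ~~ fvT 8 bt -> ~~ fvT 9 bt ->
  evalT a (ddT bt) = ddf (valU a) (Ya a) (nv a 1) (evalT a bt).
Proof.
move=> h7 h8 h9; rewrite /ddT evalT_count cntB_cons sumn_iota /ddf.
apply: eq_bigr => r _; rewrite cntB_cons sumn_iota; apply: eq_bigr => i _.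
rewrite cntB_cons sumn_iota evalPwT //; apply: eq_bigr => k _.
rewrite cntB_nil.
have -> : evalF (upd (upd (upd a 7 r) 8 i) 9 k) (FAnd (Yat (jt bt) (TVar 8)) (Lt (jt bt) tU)) =
  evalF (upd (upd (upd a 7 r) 8 i) 9 k) (Yat (jt bt) (TVar 8)) &&
  evalF (upd (upd (upd a 7 r) 8 i) 9 k) (Lt (jt bt) tU) by [].
rewrite evalY evalLt /jt !evalAdd evalMul (freshT _ _ h9) (freshT _ _ h8) (freshT _ _ h7).
done.
Qed.

Ltac fvs := rewrite /=; repeat match goal with H : is_true (~~ fvT _ _) |- _ =>
  rewrite ?(negbTE H); clear H end; done.

Lemma Wpos U L : validf U L -> 0 < Wv U L.
Proof. by move=> /valid_W [-> _]; rewrite expn_gt0. Qed.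

Definition LoT bt := Mod 10 (ddT bt) WT.
Definition HiT bt := Div 10 (ddT bt) WT.

Lemma evalLo a bt : validf (valU a) (nv a 1) ->
  ~~ fvT 7 bt -> ~~ fvT 8 bt -> ~~ fvT 9 bt -> ~~ fvT 10 bt ->
  evalT a (LoT bt) = ddf (valU a) (Ya a) (nv a 1) (evalT a bt) %% Wv (valU a) (nv a 1).
Proof.
move=> hv h7 h8 h9 h10.
have f10 : ~~ fvT 10 (ddT bt) by fvs.
have wp : 0 < evalT a WT by rewrite evalWT Wpos.
by rewrite /LoT evalMod // evalDd // evalWT.
Qed.

Lemma evalHi a bt : validf (valU a) (nv a 1) ->
  ~~ fvT 7 bt -> ~~ fvT 8 bt -> ~~ fvT 9 bt -> ~~ fvT 10 bt ->
  evalT a (HiT bt) = ddf (valU a) (Ya a) (nv a 1) (evalT a bt) %/ Wv (valU a) (nv a 1).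
Proof.
move=> hv h7 h8 h9 h10.
have f10 : ~~ fvT 10 (ddT bt) by fvs.
have wp : 0 < evalT a WT by rewrite evalWT Wpos.
by rewrite /HiT evalDiv // evalDd // evalWT.
Qed.

Definition GT kt := TCount (BCons 11 kt (BCons 12 (HiT (TVar 11)) BNil))
   (Eq (TAdd (TVar 11) TOne) kt).

Lemma evalG a kt : validf (valU a) (nv a 1) -> ~~ fvT 11 kt -> ~~ fvT 12 kt ->
  evalT a (GT kt) = Gf (valU a) (Ya a) (nv a 1) (evalT a kt).
Proof.
move=> hv h11 h12; rewrite /GT evalT_count cntB_cons sumn_iota /Gf.
apply: eq_bigr => j _; rewrite cntB_cons sumn_iota evalHi //.
apply: eq_bigr => t _; rewrite cntB_nil evalEq evalAdd (freshT _ _ h12) (freshT _ _ h11).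
by [].
Qed.

Definition ZT kt := TAdd (LoT kt) (GT kt).

Lemma evalZ a kt : validf (valU a) (nv a 1) ->
  ~~ fvT 7 kt -> ~~ fvT 8 kt -> ~~ fvT 9 kt -> ~~ fvT 10 kt -> ~~ fvT 11 kt -> ~~ fvT 12 kt ->
  evalT a (ZT kt) = Zf (valU a) (Ya a) (nv a 1) (evalT a kt).
Proof.
move=> hv h7 h8 h9 h10 h11 h12; by rewrite /ZT evalAdd evalLo // evalG.
Qed.

Definition CarryT bt := Ex 13 bt (FAnd (FLe WT (ZT (TVar 13)))
   (All 14 bt (Imp (Lt (TVar 13) (TVar 14)) (Eq (TAdd (ZT (TVar 14)) TOne) WT)))).

Lemma evalCarry a bt : validf (valU a) (nv a 1) -> ~~ fvT 13 bt -> ~~ fvT 14 bt ->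
  evalF a (CarryT bt) = carryf (valU a) (Ya a) (nv a 1) (evalT a bt).
Proof.
move=> hv h13 h14; rewrite /CarryT evalEx /carryf; apply: eq_has => k.
have -> : forall a' f g, evalF a' (FAnd f g) = evalF a' f && evalF a' g by [].
have -> : forall a' x y, evalF a' (FLe x y) = (evalT a' x <= evalT a' y) by [].
rewrite evalWT evalZ // evalAll (freshT _ _ h13); congr andb.
apply: eq_all => l; rewrite evalImp evalLt evalEq evalAdd evalZ // evalWT.
by [].
Qed.

Definition SdigT bt := Mod 15 (TAdd (ZT bt) (Cnt1 16 TOne (CarryT bt))) WT.

Lemma evalSdig a bt : validf (valU a) (nv a 1) ->
  ~~ fvT 7 bt -> ~~ fvT 8 bt -> ~~ fvT 9 bt -> ~~ fvT 10 bt -> ~~ fvT 11 bt -> ~~ fvT 12 bt ->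
  ~~ fvT 13 bt -> ~~ fvT 14 bt -> ~~ fvT 15 bt -> ~~ fvT 16 bt ->
  evalT a (SdigT bt) = sdig (valU a) (Ya a) (nv a 1) (evalT a bt).
Proof.
move=> hv h7 h8 h9 h10 h11 h12 h13 h14 h15 h16.
have f15 : ~~ fvT 15 (TAdd (ZT bt) (Cnt1 16 TOne (CarryT bt))) by fvs.
have f16 : ~~ fvF 16 (CarryT bt) by fvs.
have wp : 0 < evalT a WT by rewrite evalWT Wpos.
rewrite /SdigT evalMod // evalAdd evalZ // evalCnt1 big_ord1 (freshF _ _ f16) evalCarry //.
by rewrite evalWT.
Qed.

Definition bT := Div 19 (TVar 0) (TVar 1).
Definition rT := Mod 19 (TVar 0) (TVar 1).
Definition Body := OddF 18 (Div 17 (SdigT bT) (PwT rT)).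

Lemma evalBody a : validf (valU a) (nv a 1) ->
  evalF a Body = resf (valU a) (Ya a) (nv a 1) (nv a 0).
Proof.
move=> hv; have L1 := L_pos hv.
have e1 : 0 < evalT a (TVar 1) by [].
have eb : evalT a bT = nv a 0 %/ nv a 1 by rewrite /bT evalDiv.
have er : evalT a rT = nv a 0 %% nv a 1 by rewrite /rT evalMod.
have hr : nv a 0 %% nv a 1 < nv a 1 by rewrite ltn_mod.
have pp : evalT a (PwT rT) = 2 ^ (nv a 0 %% nv a 1).
  by rewrite evalPwT // er (pw_small hv hr).
have pp0 : 0 < evalT a (PwT rT) by rewrite pp expn_gt0.
rewrite /Body evalOdd // evalDiv // evalSdig // eb pp /resf (pw_small hv hr).
done.
Qed.

Definition Formula := Ex 1 tB (FAnd (FAnd (FLe (TAdd TOne TOne) WT) (FLe tU WT)) Body).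

Lemma evalFormula a : evalF a Formula =
  has (fun L => validf (valU a) L && resf (valU a) (Ya a) L (nv a 0)) (iota 0 (Bv (valU a))).
Proof.
rewrite /Formula evalEx evaltB; apply: eq_has => L.
have -> : evalF (upd a 1 L) (FAnd (FAnd (FLe (TAdd TOne TOne) WT) (FLe tU WT)) Body) =
  (2 <= evalT (upd a 1 L) WT) && (valU a <= evalT (upd a 1 L) WT) && evalF (upd a 1 L) Body by [].
rewrite evalWT.
have -> : (2 <= Wv (valU (upd a 1 L)) (nv (upd a 1 L) 1)) &&
   (valU a <= Wv (valU (upd a 1 L)) (nv (upd a 1 L) 1)) = validf (valU a) L by [].
case hv: (validf (valU a) L); rewrite ?andTb ?andFb //.
rewrite evalBody; last by rewrite valU_upd upd_same.
by rewrite valU_upd Ya_upd upd_same nv_upd.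
Qed.

Theorem lemma3p10 :
  exists (s_itadd : form) (bd_s_itadd : term),
    forall a : assignment,
      bitval a s_itadd bd_s_itadd = \sum_(i < valU a) YU a i.
Proof.
exists Formula, (TAdd tU tU) => a.
rewrite /bitval.
have -> : evalT a (TAdd tU tU) = valU a + valU a by [].
rewrite (eq_bigl (fun i : 'I_(valU a + valU a) =>
   has (fun L => validf (valU a) L && resf (valU a) (Ya a) L i) (iota 0 (Bv (valU a))))); last first.
  by move=> i; rewrite evalFormula.
by rewrite final_math.
Qed.
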